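(* Let $S\subset\mathbb{R}^n$ be a real algebraic variety given as the common zero set of $m$ real polynomials $F_1,\dots,F_m$ in unknowns $x_1,\dots,x_n$, such that every point $(x_1,\dots,x_n)\in S$ satisfies $0<x_i$ for $i=1,\dots,n$ and $\sum_{i=1}^n x_i<1$. Suppose the highest power of $x_i$ occurring in $F_j$ is $x_i^{d_{ij}}$, and set $$D=-1+\sum_{j=1}^m(1+d_{1j})(1+d_{2j})\cdots(1+d_{nj}).$$ Then there is a $3$-person game in which the first player has $n+1$ pure strategies, the second player has $D-m+1$ pure strategies and the third player has $D+1$ pure strategies, whose set of totally mixed Nash equilibria is stably isomorphic to $S$.
   Context: A real algebraic variety is the set of common real zeros in $\mathbb{R}^n$ of finitely many real polynomials. Two semialgebraic sets are semialgebraically isomorphic if there is a homeomorphism between them whose graph is semialgebraic; they are stably isomorphic if they are equivalent under the equivalence relation generated by semialgebraic isomorphisms and the canonical projections $W\times\mathbb{R}^k\to W$. A finite normal form game consists of players $I=\{1,\dots,N\}$, finite pure strategy sets $S_i=\{s_{i0},\dots,s_{id_i}\}$, and payoffs $u_i:\prod_i S_i\to\mathbb{R}$. A mixed strategy of player $i$ is a probability vector $\sigma_i$ on $S_i$; expected payoffs are multilinear: $u_i(\sigma)=\sum_{s}u_i(s)\prod_k\sigma_k(s_k)$, and $u_i(s_{ij},\sigma_{-i})$ denotes player $i$'s expected payoff when $i$ plays $s_{ij}$ and the others play according to $\sigma$. A profile $\sigma$ is a totally mixed Nash equilibrium if $0<\sigma_i(s_{ij})<1$ for all $i,j$ and $u_i(s_{ij},\sigma_{-i})=u_i(s_{i0},\sigma_{-i})$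 for all $i$ and $j=1,\dots,d_i$. The set of totally mixed Nash equilibria is regarded as a subset of $\mathbb{R}^{\sum_i d_i}$ via the coordinates $(\sigma_i(s_{ij}))_{1\le j\le d_i}$. *)

(* Defs.v *)
From HB Require Import structures.
From mathcomp Require Import all_boot all_order all_algebra.
From mathcomp Require Import reals.
From mathcomp Require Import mpoly.
Set Implicit Arguments. Unset Strict Implicit. Unset Printing Implicit Defensive.
Import Order.TTheory GRing.Theory Num.Theory.
Local Open Scope ring_scope.

Section Defs.
Variable R : realType.

Definition pt (T : finType) := T -> R.

Definition peval (T : finType) (p : {mpoly R[#|T|]}) (x : pt T) : R :=
  p.@[fun i : 'I_#|T| => x (enum_val i)].

Inductive semialgebraic (T : finType) : (pt T -> Prop) -> Prop :=
| sa_pos (p : {mpoly R[#|T|]}) : semialgebraic (fun x => 0 < peval p x)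
| sa_zero (p : {mpoly R[#|T|]}) : semialgebraic (fun x => peval p x = 0)
| sa_union A B : semialgebraic A -> semialgebraic B ->
    semialgebraic (fun x => A x \/ B x)
| sa_inter A B : semialgebraic A -> semialgebraic B ->
    semialgebraic (fun x => A x /\ B x)
| sa_compl A : semialgebraic A -> semialgebraic (fun x => ~ A x)
| sa_ext A B : (forall x, A x <-> B x) -> semialgebraic A -> semialgebraic B.

Definition continuous_on (T1 T2 : finType) (A : pt T1 -> Prop)
  (f : pt T1 -> pt T2) : Prop :=
  forall x, A x -> forall eps : R, 0 < eps -> exists2 delta : R, 0 < delta &
    forall y, A y -> (forall i, `|y i - x i| < delta) ->
      forall j, `|f y j - f x j| < eps.

Definition graph_on (T1 T2 : finType) (A : pt T1 -> Prop) (f : pt T1 -> pt T2)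
  : pt (T1 + T2)%type -> Prop :=
  fun z => A (fun i => z (inl i)) /\
           forall j, z (inr j) = f (fun i => z (inl i)) j.

Definition sa_isomorphic (T1 T2 : finType) (A : pt T1 -> Prop)
  (B : pt T2 -> Prop) : Prop :=
  exists (f : pt T1 -> pt T2) (g : pt T2 -> pt T1),
    [/\ (forall x, A x -> B (f x)),
        (forall y, B y -> A (g y)),
        (forall x, A x -> forall i, g (f x) i = x i),
        (forall y, B y -> forall j, f (g y) j = y j) &
       [/\ continuous_on A f, continuous_on B g & semialgebraic (graph_on A f)]].

Definition cyl (T : finType) (k : nat) (W : pt T -> Prop)
  : pt (T + 'I_k)%type -> Prop :=
  fun z => W (fun i => z (inl i)).

Inductive stably_isomorphic : forall (T1 T2 : finType),
    (pt T1 -> Prop) -> (pt T2 -> Prop) -> Prop :=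
| st_iso (T1 T2 : finType) (A : pt T1 -> Prop) (B : pt T2 -> Prop) :
    sa_isomorphic A B -> stably_isomorphic A B
| st_proj (T : finType) (k : nat) (W : pt T -> Prop) :
    semialgebraic W -> stably_isomorphic (@cyl _ k W) W
| st_refl (T : finType) (A : pt T -> Prop) : stably_isomorphic A A
| st_sym (T1 T2 : finType) (A : pt T1 -> Prop) (B : pt T2 -> Prop) :
    stably_isomorphic A B -> stably_isomorphic B A
| st_trans (T1 T2 T3 : finType) (A : pt T1 -> Prop) (B : pt T2 -> Prop)
    (C : pt T3 -> Prop) :
    stably_isomorphic A B -> stably_isomorphic B C -> stably_isomorphic A C.

(** Finite normal form games with N players; player i has the d i + 1 pure
    strategies s_i0, ..., s_i(d i), represented by 'I_(d i).+1. *)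
Definition profile (N : nat) (d : 'I_N -> nat) :=
  {dffun forall i : 'I_N, 'I_(d i).+1}.

Definition payoffs (N : nat) (d : 'I_N -> nat) := 'I_N -> profile d -> R.

Definition mixed (N : nat) (d : 'I_N -> nat) := forall i : 'I_N, 'I_(d i).+1 -> R.

Definition exp_payoff_pure (N : nat) (d : 'I_N -> nat) (u : payoffs d)
  (sigma : mixed d) (i : 'I_N) (j : 'I_(d i).+1) : R :=
  \sum_(s : profile d | s i == j) u i s * \prod_(k : 'I_N | k != i) sigma k (s k).

Arguments exp_payoff_pure {N d} u sigma i j.

Definition totally_mixed_NE (N : nat) (d : 'I_N -> nat) (u : payoffs d)
  (sigma : mixed d) : Prop :=
  [/\ (forall i, \sum_(j < (d i).+1) sigma i j = 1),
      (forall i (j : 'I_(d i).+1), 0 < sigma i j),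
      (forall i (j : 'I_(d i).+1), j != ord0 -> sigma i j < 1) &
      (forall i (j : 'I_(d i).+1),
         exp_payoff_pure u sigma i j = exp_payoff_pure u sigma i ord0)].

(** coordinate index set {(i, j) | 1 <= j <= d i}; the pair (i, j') with
    j' : 'I_(d i) stands for the strategy s_i(j'+1). *)
Definition coord (N : nat) (d : 'I_N -> nat) : finType :=
  {i : 'I_N & 'I_(d i)}.

(** the mixed profile with coordinates x:  sigma_i(s_ij) = x_(i,j) for j >= 1,
    sigma_i(s_i0) = 1 - sum_j x_(i,j) *)
Definition sigma_of (N : nat) (d : 'I_N -> nat) (x : pt (coord d)) : mixed d :=
  fun i j => match unlift ord0 j with
             | Some j' => x (Tagged (fun i => 'I_(d i)) j')
             | None => 1 - \sum_(j' < d i) x (Tagged (fun i => 'I_(d i)) j')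
             end.

Arguments sigma_of {N d} x i j.

Definition TMNE (N : nat) (d : 'I_N -> nat) (u : payoffs d) : pt (coord d) -> Prop :=
  fun x => totally_mixed_NE u (sigma_of x).

Definition zero_set (n m : nat) (F : 'I_m -> {mpoly R[n]}) : pt 'I_n -> Prop :=
  fun x => forall j, (F j).@[x] = 0.

(** the highest power of x_i occurring in p (0 for p = 0) *)
Definition deg_in (n : nat) (i : 'I_n) (p : {mpoly R[n]}) : nat :=
  \max_(mo <- msupp p) mo i.

(** D = -1 + sum_j prod_i (1 + d_ij)  (as a natural number; for m >= 1 the
    sum is >= 1, so the truncated predecessor is exact) *)
Definition Dnum (n m : nat) (F : 'I_m -> {mpoly R[n]}) : nat :=
  (\sum_(j < m) \prod_(i < n) (deg_in i (F j)).+1).-1.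

Definition game3_dims (n m D : nat) : 'I_3 -> nat :=
  fun k => nth 0%N [:: n; (D - m)%N; D] k.

End Defs.

(* Main.v *)
Require Import Defs.
From HB Require Import structures.
From mathcomp Require Import all_boot all_order all_algebra.
From mathcomp Require Import reals.
From mathcomp Require Import mpoly.
From mathcomp Require Import ring lra zify.
Import Order.TTheory GRing.Theory Num.Theory.
Local Open Scope ring_scope.
Set Implicit Arguments. Unset Strict Implicit. Unset Printing Implicit Defensive.
Section PE.
Variable R : realType.
Variable T : finType.

Definition PE (phi : pt R T -> R) :=
  exists p : {mpoly R[#|T|]}, forall x, phi x = peval p x.

Lemma PE_const c : PE (fun _ => c).
Proof. by exists c%:MP => x; rewrite /peval mevalC. Qed.

Lemma PE_coord t : PE (fun x => x t).
Proof. by exists 'X_(enum_rank t) => x; rewrite /peval mevalXU enum_rankK. Qed.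

Lemma PE_add f g : PE f -> PE g -> PE (fun x => f x + g x).
Proof. by move=> [p Hp] [q Hq]; exists (p + q) => x; rewrite /peval mevalD -!/(peval _ _) Hp Hq. Qed.

Lemma PE_opp f : PE f -> PE (fun x => - f x).
Proof. by move=> [p Hp]; exists (- p) => x; rewrite /peval mevalN -!/(peval _ _) Hp. Qed.

Lemma PE_sub f g : PE f -> PE g -> PE (fun x => f x - g x).
Proof. by move=> Hf Hg; apply: PE_add => //; apply: PE_opp. Qed.

Lemma PE_mul f g : PE f -> PE g -> PE (fun x => f x * g x).
Proof. by move=> [p Hp] [q Hq]; exists (p * q) => x; rewrite /peval mevalM -!/(peval _ _) Hp Hq. Qed.

Lemma PE_ext f g : (forall x, f x = g x) -> PE f -> PE g.
Proof. by move=> E [p Hp]; exists p => x; rewrite -E. Qed.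

Lemma PE_exp f k : PE f -> PE (fun x => f x ^+ k).
Proof.
move=> Hf; elim: k => [|k IH]; first exact: (PE_ext (f := fun _ => 1)) (PE_const 1).
apply: (PE_ext (f := fun x => f x * f x ^+ k)); first by move=> x; rewrite exprS.
exact: PE_mul.
Qed.

Lemma PE_sum (I : Type) (r : seq I) (f : I -> pt R T -> R) :
  (forall i, PE (f i)) -> PE (fun x => \sum_(i <- r) f i x).
Proof.
move=> Hf; elim: r => [|a r IH].
  by apply: (PE_ext (f := fun _ => 0)) (PE_const 0) => x; rewrite big_nil.
apply: (PE_ext (f := fun x => f a x + \sum_(i <- r) f i x)); first by move=> x; rewrite big_cons.
exact: PE_add.
Qed.

Lemma PE_prod (I : Type) (r : seq I) (f : I -> pt R T -> R) :
  (forall i, PE (f i)) -> PE (fun x => \prod_(i <- r) f i x).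
Proof.
move=> Hf; elim: r => [|a r IH].
  by apply: (PE_ext (f := fun _ => 1)) (PE_const 1) => x; rewrite big_nil.
apply: (PE_ext (f := fun x => f a x * \prod_(i <- r) f i x)); first by move=> x; rewrite big_cons.
exact: PE_mul.
Qed.

Lemma PE_meval k (p : {mpoly R[k]}) (v : 'I_k -> pt R T -> R) :
  (forall i, PE (v i)) -> PE (fun x => p.@[fun i => v i x]).
Proof.
move=> Hv; apply: (PE_ext (f := fun x => \sum_(mo <- msupp p) p@_mo * \prod_i v i x ^+ mo i)).
  by move=> x; rewrite mevalE.
apply: PE_sum => mo; apply: PE_mul; first exact: PE_const.
by apply: PE_prod => i; apply: PE_exp.
Qed.

Lemma sa_eq0 f : PE f -> semialgebraic (fun x => f x = 0).
Proof.
move=> [p Hp]; apply: (sa_ext (A := fun x => peval p x = 0)); last exact: sa_zero.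
by move=> x; rewrite Hp.
Qed.

Lemma sa_gt0 f : PE f -> semialgebraic (fun x : pt R T => 0 < f x).
Proof.
move=> [p Hp]; apply: (sa_ext (A := fun x => 0 < peval p x)); last exact: sa_pos.
by move=> x; rewrite Hp.
Qed.

Lemma sa_True : semialgebraic (fun _ : pt R T => True).
Proof.
apply: (sa_ext (A := fun x => (fun _ => 0) x = 0)); first by [].
exact: sa_eq0 (PE_const 0).
Qed.

Lemma sa_False : semialgebraic (fun _ : pt R T => False).
Proof.
apply: (sa_ext (A := fun x => 0 < (fun _ => 0) x)); first by move=> x; rewrite ltxx.
exact: sa_gt0 (PE_const 0).
Qed.

Lemma sa_and A B : semialgebraic A -> semialgebraic B ->
  semialgebraic (fun x : pt R T => A x /\ B x).
Proof. exact: sa_inter. Qed.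

Lemma sa_all (J : finType) (P : J -> pt R T -> Prop) :
  (forall j, semialgebraic (P j)) -> semialgebraic (fun x => forall j, P j x).
Proof.
move=> HP.
suff H : forall s : seq J, semialgebraic (fun x => forall j, j \in s -> P j x).
  by apply: sa_ext (H (enum J)) => x; split => Hx j; [apply: Hx; rewrite mem_enum|].
elim=> [|a s IH].
  by apply: sa_ext sa_True => x; split => // _ j; rewrite in_nil.
apply: (sa_ext (A := fun x => P a x /\ (forall j, j \in s -> P j x))); last exact: sa_and.
move=> x; split => [[Ha Hs] j|H]; first by rewrite in_cons => /orP [/eqP ->|]; [| apply: Hs].
by split => [|j js]; apply: H; rewrite in_cons ?eqxx // js orbT.
Qed.

End PE.
Section Ctn.
Variable R : realType.
Variable T : finType.
Implicit Types (A : pt R T -> Prop) (f g : pt R T -> R).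

Definition ctn A f := forall x, A x -> forall eps : R, 0 < eps ->
  exists2 delta : R, 0 < delta & forall y, A y ->
    (forall i, `|y i - x i| < delta) -> `|f y - f x| < eps.

Lemma ctn_const A c : ctn A (fun _ => c).
Proof. by move=> x _ e e0; exists 1 => // y _ _; rewrite subrr normr0. Qed.

Lemma ctn_coord A t : ctn A (fun x => x t).
Proof. by move=> x _ e e0; exists e => // y _ H; apply: H. Qed.

Lemma ctn_ext A f g : (forall x, A x -> f x = g x) -> ctn A f -> ctn A g.
Proof.
move=> E Hf x Ax e e0; have [d d0 Hd] := Hf x Ax e e0.
by exists d => // y Ay Hy; rewrite -!E //; apply: Hd.
Qed.

Lemma ctn_sub_dom A B f : (forall x, B x -> A x) -> ctn A f -> ctn B f.
Proof.
move=> AB Hf x Bx e e0; have [d d0 Hd] := Hf x (AB _ Bx) e e0.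
by exists d => // y By Hy; apply: Hd => //; apply: AB.
Qed.

Lemma two_delta (P Q : R -> Prop) :
  (exists2 d, 0 < d & forall d', 0 < d' -> d' <= d -> P d') ->
  (exists2 d, 0 < d & forall d', 0 < d' -> d' <= d -> Q d') ->
  exists2 d, 0 < d & P d /\ Q d.
Proof.
move=> [d1 d10 H1] [d2 d20 H2]; exists (Num.min d1 d2); first by rewrite lt_min d10.
by split; [apply: H1|apply: H2]; rewrite ?lt_min ?d10 ?d20 ?ge_min ?lexx ?orbT.
Qed.

Lemma ctn_add A f g : ctn A f -> ctn A g -> ctn A (fun x => f x + g x).
Proof.
move=> Hf Hg x Ax e e0.
have e20 : 0 < e / 2 by lra.
have [d1 d10 H1] := Hf x Ax _ e20; have [d2 d20 H2] := Hg x Ax _ e20.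
exists (Num.min d1 d2); first by rewrite lt_min d10.
move=> y Ay Hy.
have Hy1 : forall i, `|y i - x i| < d1 by move=> i; have := Hy i; rewrite lt_min => /andP[].
have Hy2 : forall i, `|y i - x i| < d2 by move=> i; have := Hy i; rewrite lt_min => /andP[].
have := H1 y Ay Hy1; have := H2 y Ay Hy2.
have -> : f y + g y - (f x + g x) = (f y - f x) + (g y - g x) by ring.
move=> h2 h1; apply: le_lt_trans (ler_normD _ _) _; lra.
Qed.

Lemma ctn_opp A f : ctn A f -> ctn A (fun x => - f x).
Proof.
move=> Hf x Ax e e0; have [d d0 Hd] := Hf x Ax e e0.
by exists d => // y Ay Hy; rewrite -opprD normrN; apply: Hd.
Qed.

Lemma ctn_sub A f g : ctn A f -> ctn A g -> ctn A (fun x => f x - g x).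
Proof. by move=> Hf Hg; apply: ctn_add => //; apply: ctn_opp. Qed.

Lemma ctn_mul A f g : ctn A f -> ctn A g -> ctn A (fun x => f x * g x).
Proof.
move=> Hf Hg x Ax e e0.
set a := f x; set b := g x.
have na : 0 <= `|a| by [].
have nb : 0 <= `|b| by [].
pose e1 := e / 2 / (`|b| + 1).
pose e2 := Num.min 1 (e / 2 / (`|a| + 1)).
have e10 : 0 < e1 by rewrite /e1 divr_gt0 //; lra.
have e20 : 0 < e2 by rewrite /e2 lt_min ltr01 /= divr_gt0 //; lra.
have [d1 d10 H1] := Hf x Ax _ e10; have [d2 d20 H2] := Hg x Ax _ e20.
exists (Num.min d1 d2); first by rewrite lt_min d10.
move=> y Ay Hy.
have Hy1 : forall i, `|y i - x i| < d1 by move=> i; have := Hy i; rewrite lt_min => /andP[].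
have Hy2 : forall i, `|y i - x i| < d2 by move=> i; have := Hy i; rewrite lt_min => /andP[].
have h1 := H1 y Ay Hy1; have h2 := H2 y Ay Hy2.
have h2a : `|g y - b| < 1 by apply: lt_le_trans h2 _; rewrite ge_min lexx.
have h2b : `|g y - b| <= e / 2 / (`|a| + 1) by apply: ltW; apply: lt_le_trans h2 _; rewrite ge_min lexx orbT.
have gyb : `|g y| <= `|b| + 1.
  have -> : g y = b + (g y - b) by ring.
  by apply: le_trans (ler_normD _ _) _; lra.
have -> : f y * g y - a * b = (f y - a) * g y + a * (g y - b) by ring.
apply: le_lt_trans (ler_normD _ _) _; rewrite !normrM.
have t1 : `|f y - a| * `|g y| < e / 2.
  have Hb : 0 < `|b| + 1 by lra.
  have : `|f y - a| * (`|b| + 1) < e / 2 by rewrite -ltr_pdivlMr.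
  have : 0 <= `|f y - a| by [].
  nra.
have t2 : `|a| * `|g y - b| <= e / 2.
  have Ha : 0 < `|a| + 1 by lra.
  have : `|g y - b| * (`|a| + 1) <= e / 2 by rewrite -ler_pdivlMr.
  have : 0 <= `|g y - b| by [].
  nra.
lra.
Qed.

Lemma ctn_inv A f : (forall x, A x -> f x != 0) -> ctn A f -> ctn A (fun x => (f x)^-1).
Proof.
move=> Hn Hf x Ax e e0.
set a := f x; have a0 : a != 0 by apply: Hn.
have na : 0 < `|a| by rewrite normr_gt0.
pose e1 := Num.min (`|a| / 2) (e * `|a| ^+ 2 / 2).
have e10 : 0 < e1 by rewrite /e1 lt_min !divr_gt0 ?mulr_gt0 ?exprn_gt0 //; lra.
have [d d0 Hd] := Hf x Ax _ e10.
exists d => // y Ay Hy; have h := Hd y Ay Hy.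
have h1 : `|f y - a| < `|a| / 2 by apply: lt_le_trans h _; rewrite ge_min lexx.
have h2 : `|f y - a| < e * `|a| ^+ 2 / 2 by apply: lt_le_trans h _; rewrite ge_min lexx orbT.
have fyb : `|a| / 2 < `|f y|.
  have : `|a| <= `|f y| + `|a - f y|.
    have -> : a = f y + (a - f y) by ring.
    by rewrite {1}(_ : a = f y + (a - f y)) ?ler_normD //; ring.
  by rewrite distrC; lra.
have fy0 : f y != 0 by rewrite -normr_gt0; lra.
have -> : (f y)^-1 - a^-1 = (a - f y) / (f y * a) by field; apply/andP.
rewrite normrM normfV normrM distrC.
rewrite ltr_pdivrMr ?mulr_gt0 //; last by lra.
have : `|a| ^+ 2 / 2 <= `|f y| * `|a|.
  rewrite expr2; have := fyb; nra.
move=> H.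
have : e * (`|a| ^+ 2 / 2) <= e * (`|f y| * `|a|) by rewrite ler_pM2l.
have -> : e * (`|a| ^+ 2 / 2) = e * `|a| ^+ 2 / 2 by rewrite mulrA.
lra.
Qed.

Lemma ctn_sqrt A f : (forall x, A x -> 0 < f x) -> ctn A f -> ctn A (fun x => Num.sqrt (f x)).
Proof.
move=> Hp Hf x Ax e e0.
set a := f x; have a0 : 0 < a by apply: Hp.
have sa0 : 0 < Num.sqrt a by rewrite sqrtr_gt0.
have [d d0 Hd] := Hf x Ax (e * Num.sqrt a) (mulr_gt0 e0 sa0).
exists d => // y Ay Hy; have h := Hd y Ay Hy.
have y0 : 0 < f y by apply: Hp.
have sy0 : 0 < Num.sqrt (f y) by rewrite sqrtr_gt0.
have E : (Num.sqrt (f y) - Num.sqrt a) * (Num.sqrt (f y) + Num.sqrt a) = f y - a.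
  by rewrite -subr_sqr !sqr_sqrtr // ltW.
have -> : Num.sqrt (f y) - Num.sqrt a = (f y - a) / (Num.sqrt (f y) + Num.sqrt a).
  by rewrite -E mulfK // gt_eqF //; lra.
rewrite normrM normfV (@gtr0_norm _ (Num.sqrt (f y) + Num.sqrt a)); last by lra.
rewrite ltr_pdivrMr; last by lra.
apply: lt_le_trans h _; rewrite ler_pM2l //; lra.
Qed.

Lemma ctn_sum A (I : Type) (r : seq I) (f : I -> pt R T -> R) :
  (forall i, ctn A (f i)) -> ctn A (fun x => \sum_(i <- r) f i x).
Proof.
move=> Hf; elim: r => [|a r IH].
  by refine (ctn_ext _ (ctn_const (A := A) 0)) => x _; rewrite big_nil.
refine (ctn_ext (f := fun x => f a x + \sum_(i <- r) f i x) _ _); first by move=> x _; rewrite big_cons.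
exact: ctn_add.
Qed.

Lemma ctn_prod A (I : Type) (r : seq I) (f : I -> pt R T -> R) :
  (forall i, ctn A (f i)) -> ctn A (fun x => \prod_(i <- r) f i x).
Proof.
move=> Hf; elim: r => [|a r IH].
  by refine (ctn_ext _ (ctn_const (A := A) 1)) => x _; rewrite big_nil.
refine (ctn_ext (f := fun x => f a x * \prod_(i <- r) f i x) _ _); first by move=> x _; rewrite big_cons.
exact: ctn_mul.
Qed.

Lemma ctn_exp A f k : ctn A f -> ctn A (fun x => f x ^+ k).
Proof.
move=> Hf; elim: k => [|k IH]; first exact: ctn_const.
refine (ctn_ext (f := fun x => f x * f x ^+ k) _ _); first by move=> x _; rewrite exprS.
exact: ctn_mul.
Qed.

Lemma ctn_vec (T2 : finType) A (f : pt R T -> pt R T2) :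
  (forall j, ctn A (fun x => f x j)) -> continuous_on A f.
Proof.
move=> Hf x Ax e e0.
suff H : forall s : seq T2, exists2 d : R, 0 < d & forall y, A y ->
    (forall i, `|y i - x i| < d) -> forall j, j \in s -> `|f y j - f x j| < e.
  by have [d d0 Hd] := H (enum T2); exists d => // y Ay Hy j; apply: Hd; rewrite ?mem_enum.
elim=> [|a s [d d0 Hd]]; first by exists 1 => // y _ _ j; rewrite in_nil.
have [d1 d10 H1] := Hf a x Ax e e0.
exists (Num.min d d1); first by rewrite lt_min d0.
move=> y Ay Hy j; rewrite in_cons => /orP [/eqP ->|js].
  by apply: H1 => // i; have := Hy i; rewrite lt_min => /andP[].
by apply: Hd => // i; have := Hy i; rewrite lt_min => /andP[].
Qed.

End Ctn.
Section Mono.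
Variable R : realType.
Variables n m : nat.
Variable F : 'I_m -> {mpoly R[n]}.
Variables (i0 : 'I_n) (j0 : 'I_m).
Hypothesis Hdeg0 : (0 < deg_in i0 (F j0))%N.

Definition deg i j := deg_in i (F j).
Definition dm := \max_(j < m) \max_(i < n) deg i j.
Definition Mon := {ffun 'I_n -> 'I_dm.+1}.
Definition mzero : Mon := [ffun _ => ord0].
Definition top j : Mon := [ffun i => inord (deg i j)].
Definition inB j (b : Mon) := [forall i, (b i <= deg i j)%N].
Definition Bset j := [set b : Mon | inB j b & b != top j].
Definition U := \bigcup_(j < m) Bset j.
Definition Pj j := (\prod_(i < n) (deg i j).+1)%N.

Lemma deg_le_dm i j : (deg i j <= dm)%N.
Proof.
apply: leq_trans (leq_bigmax j).
exact: (leq_bigmax (F := fun i => deg i j) i).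
Qed.

Lemma top_val i j : (top j i : nat) = deg i j.
Proof. by rewrite ffunE inordK // ltnS deg_le_dm. Qed.

Lemma card_leq_ord (k e : nat) : (e < k)%N -> #|[pred a : 'I_k | (a <= e)%N]| = e.+1.
Proof.
move=> ek.
rewrite -(card_ord e.+1).
have f_inj : injective (fun a : 'I_e.+1 => (widen_ord ek a)).
  by move=> a b /(congr1 val) /= /val_inj.
rewrite -(card_image f_inj); apply: eq_card => a; rewrite inE /=.
apply/idP/imageP => [ae|[b _ ->] /=]; last by rewrite -ltnS ltn_ord.
by exists (Ordinal (ae : (a < e.+1)%N)) => //; apply: val_inj.
Qed.

Lemma card_inB j : #|[pred b : Mon | inB j b]| = Pj j.
Proof.
have := card_family (fun i : 'I_n => [pred a : 'I_dm.+1 | (a <= deg i j)%N]).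
have -> : #|(family (fun i : 'I_n => [pred a : 'I_dm.+1 | (a <= deg i j)%N]) : simpl_pred Mon)|
     = #|[pred b : Mon | inB j b]|.
  apply: eq_card => b; rewrite !inE /inB; apply/familyP/forallP => H i; exact: H.
move=> ->; rewrite /Pj /image_mem foldr_map.
have -> : forall s : seq 'I_n, foldr (fun x => [eta muln #|[pred a : 'I_dm.+1 | (a <= deg x j)%N]|]) 1%N s
   = (\prod_(x <- s) #|[pred a : 'I_dm.+1 | (a <= deg x j)%N]|)%N.
  by elim => [|a s IH]; rewrite ?big_nil ?big_cons //= IH.
rewrite [index_enum _]unlock -enumT; apply: eq_bigr => i _.
by rewrite card_leq_ord // ltnS deg_le_dm.
Qed.

Definition Dn := Dnum F.
Definition K := (Dn - m)%N.

Lemma Pj_gt0 j : (0 < Pj j)%N.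
Proof. by rewrite /Pj prodn_gt0. Qed.

Lemma Pj0_gt1 : (1 < Pj j0)%N.
Proof.
rewrite /Pj (bigD1 i0) //=.
have : (0 < \prod_(i < n | i != i0) (deg i j0).+1)%N by rewrite prodn_gt0.
have := Hdeg0; rewrite /deg.
move: (\prod_(i < n | i != i0) (deg_in i (F j0)).+1)%N (deg_in i0 (F j0)) => a b; nia.
Qed.

Lemma sumP : (m < \sum_(j < m) Pj j)%N.
Proof.
rewrite (bigD1 j0) //=.
have : (m - 1 <= \sum_(j < m | j != j0) Pj j)%N.
  have -> : (m - 1 = \sum_(j < m | j != j0) 1)%N.
    by rewrite sum1_card cardC1 card_ord subn1.
  by apply: leq_sum => j _; apply: Pj_gt0.
have := Pj0_gt1; have : (0 < m)%N by apply: leq_ltn_trans (ltn_ord j0).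
move: (\sum_(j < m | j != j0) Pj j)%N (Pj j0) => a b; lia.
Qed.

Lemma Dn_eq : Dn = (\sum_(j < m) Pj j).-1.
Proof. by []. Qed.

Lemma eD : Dn.+1 = (K.+1 + m)%N.
Proof. have := sumP; rewrite /K Dn_eq; lia. Qed.

Lemma top_inB j : inB j (top j).
Proof. by apply/forallP => i; rewrite top_val. Qed.

Lemma card_Bset j : #|Bset j| = (Pj j).-1.
Proof.
rewrite -card_inB [in RHS](cardD1 (top j)) inE top_inB /= add0n.
by apply: eq_card => b; rewrite !inE andbC.
Qed.

Lemma card_U : (#|U| <= K.+1)%N.
Proof.
have H1 : (#|U| <= \sum_(j < m) #|Bset j|)%N.
  rewrite /U; elim/big_ind2: _ => //; first by rewrite cards0.
  by move=> a A b B Ha Hb; apply: leq_trans (leq_card_setU A B).1 _; apply: leq_add.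
apply: leq_trans H1 _.
have H2 : (\sum_(j < m) #|Bset j| + m = \sum_(j < m) Pj j)%N.
  rewrite -[X in (_ + X)%N](card_ord m) -sum1_card -big_split /=.
  apply: eq_bigr => j _; rewrite card_Bset addn1 prednK //; exact: Pj_gt0.
have := sumP; rewrite /K Dn_eq; lia.
Qed.

Lemma mzero_U : mzero \in U.
Proof.
apply/bigcupP; exists j0 => //; rewrite inE; apply/andP; split.
  by apply/forallP => i; rewrite ffunE.
apply/eqP => /(congr1 (fun b : Mon => (b i0 : nat))); rewrite ffunE top_val /=.
by move=> E; move: Hdeg0; rewrite -/(deg i0 j0) -E.
Qed.

Definition e := enum U.
Definition slot (b : Mon) : 'I_K.+1 := inord (index b e).
Definition mon_of (k : 'I_K.+1) : option Mon :=
  if (k < size e)%N then Some (nth mzero e k) else None.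
Definition k0 := slot mzero.

Lemma size_e : size e = #|U|.
Proof. by rewrite /e cardE. Qed.

Lemma slot_val b : b \in U -> (slot b : nat) = index b e.
Proof.
move=> bU; rewrite /slot inordK //; apply: leq_trans card_U.
by rewrite -size_e index_mem /e mem_enum.
Qed.

Lemma mon_of_slot b : b \in U -> mon_of (slot b) = Some b.
Proof.
move=> bU; rewrite /mon_of slot_val // index_mem /e mem_enum bU.
by rewrite nth_index // mem_enum.
Qed.

Lemma slot_mon k b : mon_of k = Some b -> b \in U /\ slot b = k.
Proof.
rewrite /mon_of; case: ifP => // ke [<-]; split; first by rewrite -(mem_enum (mem U)) mem_nth.
have nU : nth mzero e k \in U by rewrite -(mem_enum (mem U)) mem_nth.
by apply: val_inj => /=; rewrite slot_val // index_uniq // enum_uniq.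
Qed.

Lemma mon_of_k0 : mon_of k0 = Some mzero.
Proof. exact: mon_of_slot mzero_U. Qed.

Definition piv (b : Mon) : 'I_n := odflt i0 [pick i | (0 < b i)%N].

Lemma piv_pos b : b != mzero -> (0 < b (piv b))%N.
Proof.
rewrite /piv; case: pickP => //= H; case/eqP; apply/ffunP => i; rewrite ffunE.
by apply: val_inj => /=; move: (H i); rewrite lt0n => /negbFE /eqP.
Qed.

Definition dec (b : Mon) (i : 'I_n) : Mon :=
  [ffun t => if t == i then inord (b i).-1 else b t].

Lemma dec_val b i t : (dec b i t : nat) = if t == i then (b i).-1 else b t.
Proof.
rewrite ffunE; case: ifP => // _; rewrite inordK //.
by apply: leq_ltn_trans (leq_pred _) (ltn_ord _).
Qed.

Lemma dec_Bset j b i : inB j b -> (0 < b i)%N -> dec b i \in Bset j.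
Proof.
move=> /forallP Hb bi; rewrite inE; apply/andP; split.
  apply/forallP => t; rewrite dec_val; case: ifP => // /eqP ->.
  by apply: leq_trans (leq_pred _) (Hb i).
apply/eqP => /(congr1 (fun c : Mon => (c i : nat))); rewrite dec_val eqxx top_val.
by move=> E; have := Hb i; rewrite -E; case: (b i : nat) bi => //= k _; rewrite ltnn.
Qed.

Lemma dec_U b : b \in U -> b != mzero -> dec b (piv b) \in U.
Proof.
move=> /bigcupP [j _]; rewrite inE => /andP [Hb _] bz.
by apply/bigcupP; exists j => //; apply: dec_Bset => //; apply: piv_pos.
Qed.

Definition sz (b : Mon) := (\sum_i (b i : nat))%N.

Lemma sz_dec (b : Mon) (i : 'I_n) : (0 < b i)%N -> (sz (dec b i) < sz b)%N.
Proof.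
move=> bi; rewrite /sz (bigD1 i) //= [X in (_ < X)%N](bigD1 i) //= dec_val eqxx.
rewrite (eq_bigr (fun t => (b t : nat))); last by move=> t /negbTE ti; rewrite dec_val ti.
by rewrite ltn_add2r prednK // ltnSn.
Qed.


Definition xpow (x : 'I_n -> R) (b : Mon) := \prod_i x i ^+ b i.

Lemma xpow_dec x (b : Mon) i : (0 < b i)%N -> x i * xpow x (dec b i) = xpow x b.
Proof.
move=> bi; rewrite /xpow (bigD1 i) //= [in RHS](bigD1 i) //= dec_val eqxx mulrA -exprS prednK //.
congr (_ * _); apply: eq_bigr => t /negbTE ti; by rewrite dec_val ti.
Qed.

Lemma xpow0 x : xpow x mzero = 1.
Proof. by rewrite /xpow big1 // => i _; rewrite ffunE expr0. Qed.

Lemma xpow_gt0 x b : (forall i, 0 < x i) -> 0 < xpow x b.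
Proof. by move=> Hx; rewrite /xpow prodr_gt0 // => i _; rewrite exprn_gt0. Qed.

Definition toMon (a : 'X_{1..n}) : Mon := [ffun i => inord (a i)].

Lemma msupp_deg j a : a \in msupp (F j) -> forall i, (a i <= deg i j)%N.
Proof. by move=> Ha i; rewrite /deg /deg_in (leq_bigmax_seq (F := fun mo : 'X_{1..n} => mo i) a). Qed.

Lemma toMon_val j a i : a \in msupp (F j) -> (toMon a i : nat) = a i.
Proof.
move=> Ha; rewrite ffunE inordK // ltnS; apply: leq_trans (msupp_deg Ha i) _.
exact: deg_le_dm.
Qed.

Lemma toMon_inB j a : a \in msupp (F j) -> inB j (toMon a).
Proof. by move=> Ha; apply/forallP => i; rewrite (toMon_val _ Ha) msupp_deg. Qed.

Lemma F_eval x j : (F j).@[x] = \sum_(a <- msupp (F j)) (F j)@_a * xpow x (toMon a).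
Proof.
rewrite mevalE; apply: eq_big_seq => a Ha; congr (_ * _).
by apply: eq_bigr => i _; rewrite (toMon_val _ Ha).
Qed.

Lemma toMon_U j a : a \in msupp (F j) -> toMon a != mzero ->
  dec (toMon a) (piv (toMon a)) \in U.
Proof.
move=> Ha nz; apply/bigcupP; exists j => //; apply: dec_Bset; first exact: toMon_inB Ha.
exact: piv_pos.
Qed.


Definition Cr (rl : 'I_K.+1 + 'I_m) (a : 'I_n.+1) (b : 'I_K.+1) : R :=
  match rl with
  | inl k => if k == k0 then 0 else
      match mon_of k with
      | Some bb => ((b == k)%:R - (a == lift ord0 (piv bb))%:R * (b == slot (dec bb (piv bb)))%:R)
      | None => ((b == k)%:R - (b == k0)%:R)
      end
  | inr j => \sum_(al <- msupp (F j)) (F j)@_al *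
      (if toMon al == mzero then (b == k0)%:R
       else (a == lift ord0 (piv (toMon al)))%:R * (b == slot (dec (toMon al) (piv (toMon al))))%:R)
  end.

Definition bil (C : 'I_n.+1 -> 'I_K.+1 -> R) (s1 : 'I_n.+1 -> R) (s2 : 'I_K.+1 -> R) :=
  \sum_a \sum_b C a b * (s1 a * s2 b).

Section Bil.
Variables (s1 : 'I_n.+1 -> R) (s2 : 'I_K.+1 -> R).

Lemma bilB C1 C2 : bil (fun a b => C1 a b - C2 a b) s1 s2 = bil C1 s1 s2 - bil C2 s1 s2.
Proof.
rewrite /bil -sumrB; apply: eq_bigr => a _; rewrite -sumrB; apply: eq_bigr => b _.
by rewrite mulrBl.
Qed.

Lemma bil0 : bil (fun _ _ => 0) s1 s2 = 0.
Proof. by rewrite /bil big1 // => a _; rewrite big1 // => b _; rewrite mul0r. Qed.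

Lemma bil_sum (X : Type) (r : seq X) (c : X -> R) (C : X -> 'I_n.+1 -> 'I_K.+1 -> R) :
  bil (fun a b => \sum_(x <- r) c x * C x a b) s1 s2 = \sum_(x <- r) c x * bil (C x) s1 s2.
Proof.
rewrite /bil.
under eq_bigr => a _ do under eq_bigr => b _ do rewrite mulr_suml.
under eq_bigr => a _ do rewrite exchange_big /=.
rewrite exchange_big /=; apply: eq_bigr => x _.
rewrite mulr_sumr; apply: eq_bigr => a _; rewrite mulr_sumr; apply: eq_bigr => b _.
by rewrite -mulrA.
Qed.

Lemma bil_if (c : bool) C1 C2 :
  bil (fun a b => if c then C1 a b else C2 a b) s1 s2 = if c then bil C1 s1 s2 else bil C2 s1 s2.
Proof. by case: c. Qed.

Lemma sum_ind (N : nat) (k : 'I_N) (g : 'I_N -> R) : \sum_b (b == k)%:R * g b = g k.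
Proof.
rewrite (bigD1 k) //= eqxx mul1r big1 ?addr0 // => b /negbTE ->; by rewrite mul0r.
Qed.

Lemma bil_b k : bil (fun a b => (b == k)%:R) s1 s2 = (\sum_a s1 a) * s2 k.
Proof.
rewrite /bil mulr_suml; apply: eq_bigr => a _.
by rewrite (eq_bigr (fun b => (b == k)%:R * (s1 a * s2 b))) // sum_ind.
Qed.

Lemma bil_ab p q : bil (fun a b => (a == p)%:R * (b == q)%:R) s1 s2 = s1 p * s2 q.
Proof.
rewrite /bil (eq_bigr (fun a => (a == p)%:R * (s1 a * s2 q))) ?sum_ind // => a _.
rewrite -(sum_ind q (fun b => (a == p)%:R * (s1 a * s2 b))).
by apply: eq_bigr => b _; rewrite !mulrA [_ * (a == p)%:R]mulrC.
Qed.

Hypothesis Hs1 : \sum_a s1 a = 1.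

Lemma bil_inl k : bil (Cr (inl k)) s1 s2 =
  if k == k0 then 0 else
  match mon_of k with
  | Some bb => s2 k - s1 (lift ord0 (piv bb)) * s2 (slot (dec bb (piv bb)))
  | None => s2 k - s2 k0
  end.
Proof.
rewrite /Cr; case: (k == k0); first exact: bil0.
case: (mon_of k) => [bb|].
  by rewrite bilB bil_b bil_ab Hs1 mul1r.
by rewrite bilB !bil_b Hs1 !mul1r.
Qed.

Lemma bil_inr j : bil (Cr (inr j)) s1 s2 =
  \sum_(al <- msupp (F j)) (F j)@_al *
      (if toMon al == mzero then s2 k0
       else s1 (lift ord0 (piv (toMon al))) * s2 (slot (dec (toMon al) (piv (toMon al))))).
Proof.
rewrite /Cr bil_sum; apply: eq_bigr => al _; congr (_ * _).
by rewrite bil_if bil_b bil_ab Hs1 mul1r.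
Qed.

End Bil.

Definition wt (x : 'I_n -> R) (k : 'I_K.+1) := if mon_of k is Some b then xpow x b else 1.
Definition Q (x : 'I_n -> R) := \sum_k wt x k.

Lemma wt_gt0 x k : (forall i, 0 < x i) -> 0 < wt x k.
Proof. by move=> Hx; rewrite /wt; case: (mon_of k) => // b; apply: xpow_gt0. Qed.

Lemma Q_gt0 x : (forall i, 0 < x i) -> 0 < Q x.
Proof.
move=> Hx; rewrite /Q (bigD1 k0) //=; apply: ltr_pwDl; first exact: wt_gt0.
by apply: sumr_ge0 => k _; apply: ltW; apply: wt_gt0.
Qed.

Lemma wt_slot x b : b \in U -> wt x (slot b) = xpow x b.
Proof. by move=> bU; rewrite /wt mon_of_slot. Qed.

Lemma wt_k0 x : wt x k0 = 1.
Proof. by rewrite /wt mon_of_k0 xpow0. Qed.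

Section Solve.
Variables (s1 : 'I_n.+1 -> R) (s2 : 'I_K.+1 -> R).
Hypothesis Hs1 : \sum_a s1 a = 1.
Hypothesis Hpos1 : forall a, 0 < s1 a.
Variable x : 'I_n -> R.
Hypothesis Hx : forall i, s1 (lift ord0 i) = x i.
Lemma xpos : forall i, 0 < x i. Proof. by move=> i; rewrite -Hx; apply: Hpos1. Qed.

Lemma solve_fwd : \sum_b s2 b = 1 -> (forall b, 0 < s2 b) ->
  (forall rl, bil (Cr rl) s1 s2 = 0) ->
  (forall j, (F j).@[x] = 0) /\ (forall k, s2 k = wt x k / Q x).
Proof.
move=> Hs2 Hpos2 Hrel.
have step1 : forall N b, (sz b < N)%N -> b \in U -> s2 (slot b) = xpow x b * s2 k0.
  elim=> [//|N IH] b szb bU.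
  have [->|bz] := eqVneq b mzero; first by rewrite xpow0 mul1r.
  have kk0 : slot b != k0.
    apply/negP => /eqP E; move: (mon_of_slot bU); rewrite E mon_of_k0 => -[E'].
    by rewrite E' eqxx in bz.
  have := Hrel (inl (slot b)); rewrite bil_inl // (negbTE kk0) mon_of_slot //.
  move/eqP; rewrite subr_eq0 => /eqP ->.
  have pb := piv_pos bz.
  rewrite (IH _ _ (dec_U bU bz)); last by apply: leq_trans (sz_dec pb) _.
  by rewrite mulrA Hx xpow_dec.
have step2 : forall k, s2 k = wt x k * s2 k0.
  move=> k; rewrite /wt; case E: (mon_of k) => [b|].
    by have [bU <-] := slot_mon E; apply: step1 (leqnn _) bU.
  have kk0 : k != k0 by apply/negP => /eqP Ek; rewrite Ek mon_of_k0 in E.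
  have := Hrel (inl k); rewrite bil_inl // (negbTE kk0) E.
  by move/eqP; rewrite subr_eq0 => /eqP ->; rewrite mul1r.
have Qp := Q_gt0 xpos.
have step3 : s2 k0 = (Q x)^-1.
  have : Q x * s2 k0 = 1 by rewrite -Hs2 /Q mulr_suml; apply: eq_bigr => k _; rewrite -step2.
  by move=> H; rewrite -[s2 k0]mul1r -(mulVf (lt0r_neq0 Qp)) -mulrA H mulr1.
split; last by move=> k; rewrite step2 step3.
move=> j; have := Hrel (inr j); rewrite bil_inr //.
have -> : \sum_(al <- msupp (F j)) (F j)@_al *
      (if toMon al == mzero then s2 k0
       else s1 (lift ord0 (piv (toMon al))) * s2 (slot (dec (toMon al) (piv (toMon al)))))
   = (F j).@[x] * s2 k0.
  rewrite F_eval mulr_suml; apply: eq_big_seq => al Ha; rewrite -mulrA; congr (_ * _).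
  case: eqP => [->|/eqP nz]; first by rewrite xpow0 mul1r.
  rewrite (step1 _ _ (ltnSn _) (toMon_U Ha nz)).
  by rewrite mulrA Hx xpow_dec // piv_pos.
move/eqP; rewrite mulf_eq0 => /orP [/eqP //|]; rewrite step3 invr_eq0 => /eqP Q0.
by rewrite Q0 ltxx in Qp.
Qed.

Lemma solve_bwd : (forall j, (F j).@[x] = 0) -> (forall k, s2 k = wt x k / Q x) ->
  forall rl, bil (Cr rl) s1 s2 = 0.
Proof.
move=> HF Hs2 [k|j].
  rewrite bil_inl //; case: eqP => // /eqP kk0.
  case E: (mon_of k) => [b|]; last by rewrite !Hs2 wt_k0 /wt E subrr.
  have [bU Eb] := slot_mon E.
  have bz : b != mzero by apply/negP => /eqP bz; rewrite -Eb bz eqxx in kk0.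
  rewrite !Hs2 wt_slot ?dec_U // /wt E mulrA Hx xpow_dec ?piv_pos //.
  by rewrite subrr.
rewrite bil_inr //.
rewrite (eq_big_seq (fun al => (F j)@_al * xpow x (toMon al) / Q x)); last first.
  move=> al Ha; rewrite -mulrA; congr (_ * _).
  case: eqP => [->|/eqP nz]; first by rewrite Hs2 wt_k0 xpow0.
  by rewrite Hs2 wt_slot ?(toMon_U Ha) // mulrA Hx xpow_dec // piv_pos.
by rewrite -mulr_suml -F_eval HF mul0r.
Qed.
End Solve.

Definition d := game3_dims n m Dn.
Definition p0 : 'I_3 := @Ordinal 3 0 isT.
Definition p1 : 'I_3 := @Ordinal 3 1 isT.
Definition p2 : 'I_3 := @Ordinal 3 2 isT.

Lemma I3_cases (t : 'I_3) : t = p0 \/ t = p1 \/ t = p2.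
Proof.
case: t => [[|[|[|k]]] Hk]; [left|right;left|right;right|by []]; by apply: val_inj.
Qed.

Definition Cv (r : 'I_Dn.+1) := Cr (split (cast_ord eD r)).

Definition u : payoffs R d :=
  fun i s => if i == p2 then Cv (s p2) (s p0) (s p1) else 0.

Definition mkp (j : 'I_Dn.+1) (ab : 'I_n.+1 * 'I_K.+1) : profile d :=
  [ffun t : 'I_3 => (inord (if t == p0 then val ab.1 else if t == p1 then val ab.2 else val j)
                       : 'I_(d t).+1)].

Lemma sum3 (g : 'I_n.+1 -> 'I_K.+1 -> R) (j : 'I_Dn.+1) :
  \sum_(s : profile d | s p2 == j) g (s p0) (s p1) = \sum_a \sum_b g a b.
Proof.
rewrite pair_bigA /=.
rewrite (reindex_onto (fun s : profile d => (s p0, s p1)) (mkp j)) /=; last first.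
  by move=> [a b] _; rewrite /mkp !ffunE /= !inord_val.
apply: eq_bigl => s; apply/eqP/eqP => [<-|Hs]; last first.
  by rewrite -Hs /mkp ffunE /= inord_val.
apply/ffunP => t; rewrite /mkp ffunE; have [->|[->|->]] := I3_cases t => /=;
  exact: inord_val.
Qed.


Lemma prod3 (f : 'I_3 -> R) : \prod_(k < 3 | k != p2) f k = f p0 * f p1.
Proof.
rewrite (bigD1 p0) // (bigD1 p1) //= [X in _ * (_ * X)]big1 ?mulr1 // => k /andP [/andP [k2 k0'] k1'].
by have [E|[E|E]] := I3_cases k; rewrite E in k2 k0' k1'.
Qed.

Lemma exp_p2 (sg : mixed R d) (j : 'I_(d p2).+1) :
  @exp_payoff_pure R 3 d u sg p2 j = bil (Cv j) (sg p0) (sg p1).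
Proof.
rewrite /exp_payoff_pure.
under eq_bigr => s /eqP Hs do rewrite /u eqxx Hs prod3.
exact: (sum3 (fun a b => Cv j a b * (sg p0 a * sg p1 b))).
Qed.

Lemma exp_other (sg : mixed R d) i (j : 'I_(d i).+1) : i != p2 ->
  @exp_payoff_pure R 3 d u sg i j = 0.
Proof.
move=> /negbTE i2; rewrite /exp_payoff_pure big1 // => s _.
by rewrite /u i2 mul0r.
Qed.

Definition xw (w : pt R (Defs.coord d)) (i : 'I_n) : R := w (@existT 'I_3 (fun t => 'I_(d t)) p0 i).
Definition yw (w : pt R (Defs.coord d)) (k : 'I_K) : R := w (@existT 'I_3 (fun t => 'I_(d t)) p1 k).
Definition zw (w : pt R (Defs.coord d)) (k : 'I_Dn) : R := w (@existT 'I_3 (fun t => 'I_(d t)) p2 k).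

Lemma sig_lift (w : pt R (Defs.coord d)) (i : 'I_3) (j : 'I_(d i)) :
  @sigma_of R 3 d w i (lift ord0 j) = w (@existT 'I_3 (fun t => 'I_(d t)) i j).
Proof. by rewrite /sigma_of liftK. Qed.

Lemma sig0 (w : pt R (Defs.coord d)) (i : 'I_3) :
  @sigma_of R 3 d w i ord0 = 1 - \sum_(j < d i) w (@existT 'I_3 (fun t => 'I_(d t)) i j).
Proof. by rewrite /sigma_of unlift_none. Qed.

Lemma sig_sum (w : pt R (Defs.coord d)) (i : 'I_3) : \sum_j @sigma_of R 3 d w i j = 1.
Proof.
rewrite big_ord_recl; under eq_bigr => j _ do rewrite sig_lift.
by rewrite sig0 subrK.
Qed.

Lemma lt1_of (N : nat) (s : 'I_N.+1 -> R) (j : 'I_N.+1) :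
  (forall j, 0 < s j) -> \sum_j s j = 1 -> j != ord0 -> s j < 1.
Proof.
move=> Hp Hs j0'; rewrite -Hs (bigD1 j) //= (bigD1 ord0) 1?eq_sym //=.
rewrite -ltrBlDl subrr; apply: ltr_pwDl; first exact: Hp.
by apply: sumr_ge0 => k _; apply: ltW.
Qed.

Definition Wset (x : 'I_n -> R) (z : 'I_Dn -> R) :=
  [/\ zero_set F x, (forall k, 0 < z k) & \sum_k z k < 1].

Hypothesis HS : forall x : 'I_n -> R, zero_set F x ->
  (forall i, 0 < x i) /\ \sum_(i < n) x i < 1.

Lemma rel_all (s1 : 'I_n.+1 -> R) (s2 : 'I_K.+1 -> R) :
  (forall r : 'I_Dn.+1, bil (Cv r) s1 s2 = bil (Cv ord0) s1 s2) ->
  forall rl, bil (Cr rl) s1 s2 = 0.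
Proof.
move=> H.
have CvE rl : Cv (cast_ord (esym eD) (unsplit rl)) = Cr rl.
  by rewrite /Cv cast_ordKV unsplitK.
have H0 : bil (Cv ord0) s1 s2 = 0.
  rewrite -(H (cast_ord (esym eD) (unsplit (inl k0)))) CvE /bil big1 // => a _; rewrite big1 // => b _.
  by rewrite /Cr eqxx mul0r.
by move=> rl; rewrite -CvE H.
Qed.

Lemma TMNE_char (w : pt R (Defs.coord d)) :
  TMNE u w <-> Wset (xw w) (zw w) /\
               forall k : 'I_K, yw w k = wt (xw w) (lift ord0 k) / Q (xw w).
Proof.
split.
  move=> [Hsum Hpos Hlt Heq].
  have Hx i : @sigma_of R 3 d w p0 (lift ord0 i) = xw w i by rewrite sig_lift.
  have Hrel := rel_all (fun r => etrans (esym (exp_p2 _ r)) (etrans (Heq p2 r) (exp_p2 _ ord0))).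
  have [HF Hs2] := solve_fwd (sig_sum w p0) (Hpos p0) Hx (sig_sum w p1) (Hpos p1) Hrel.
  split; last by move=> k; rewrite -Hs2 sig_lift.
  split => //.
    by move=> k; have := Hpos p2 (lift ord0 k); rewrite sig_lift.
  by have := Hpos p2 ord0; rewrite sig0 subr_gt0.
move=> [[HF Hz Hzs] Hy].
have [Hxp Hxs] := HS HF.
have Qp := Q_gt0 Hxp.
have Hs1 : forall k : 'I_K.+1, @sigma_of R 3 d w p1 k = wt (xw w) k / Q (xw w).
  move=> k; case: (unliftP ord0 k) => [k' ->|->]; first by rewrite sig_lift -/(yw w k') Hy.
  rewrite sig0; under eq_bigr => j _ do rewrite -/(yw w j) Hy.
  have : \sum_(k : 'I_K.+1) wt (xw w) k / Q (xw w) = 1.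
    by rewrite -mulr_suml divff // gt_eqF.
  by rewrite big_ord_recl => <-; rewrite addrK.
have Hpos : forall i (j : 'I_(d i).+1), 0 < @sigma_of R 3 d w i j.
  move=> i; have [->|[->|->]] := I3_cases i => j.
  - case: (unliftP ord0 j) => [j' ->|->]; first by rewrite sig_lift; apply: Hxp.
    by rewrite sig0 subr_gt0.
  - by rewrite Hs1 divr_gt0 // wt_gt0.
  - case: (unliftP ord0 j) => [j' ->|->]; first by rewrite sig_lift; apply: Hz.
    by rewrite sig0 subr_gt0.
split.
- exact: sig_sum.
- exact: Hpos.
- by move=> i j jn; apply: lt1_of => //; apply: sig_sum.
move=> i; have [->|[->|->]] := I3_cases i => j.
- by rewrite !exp_other.
- by rewrite !exp_other.
have Hx i' : @sigma_of R 3 d w p0 (lift ord0 i') = xw w i' by rewrite sig_lift.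
have Hb := @solve_bwd (@sigma_of R 3 d w p0) (@sigma_of R 3 d w p1) (sig_sum w p0) (xw w) Hx (fun j => HF j) Hs1.
rewrite !exp_p2 /Cv !Hb //.
Qed.


Definition fam (a : 'I_n -> R) (b : 'I_K -> R) (c : 'I_Dn -> R) (i : 'I_3) : 'I_(d i) -> R :=
  match i as i0 return 'I_(d i0) -> R with
  | @Ordinal _ k Hk =>
    match k as k0 return (forall H : (k0 < 3)%N, 'I_(d (@Ordinal 3 k0 H)) -> R) with
    | 0 => fun _ => a
    | 1 => fun _ => b
    | 2 => fun _ => c
    | _ => fun _ _ => 0
    end Hk
  end.

Definition TW := ('I_n + 'I_Dn)%type.
Definition TT := Defs.coord d.

Definition Wp (p : pt R TW) := Wset (fun i => p (inl i)) (fun k => p (inr k)).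

Definition f2 (p : pt R TW) : pt R TT := fun t =>
  @fam (fun i => p (inl i))
      (fun k => wt (fun i => p (inl i)) (lift ord0 k) / Q (fun i => p (inl i)))
      (fun k => p (inr k)) (tag t) (tagged t).

Definition g2 (w : pt R TT) : pt R TW := fun t =>
  match t with inl i => xw w i | inr k => zw w k end.

Lemma coord_cases (P : TT -> Prop) :
  (forall j : 'I_n, P (@existT 'I_3 (fun t => 'I_(d t)) p0 j)) ->
  (forall j : 'I_K, P (@existT 'I_3 (fun t => 'I_(d t)) p1 j)) ->
  (forall j : 'I_Dn, P (@existT 'I_3 (fun t => 'I_(d t)) p2 j)) ->
  forall t, P t.
Proof.
move=> H0 H1 H2 [i j]; have [E|[E|E]] := I3_cases i; subst i; [exact: H0|exact: H1|exact: H2].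
Qed.


Section Gen.
Variable T : finType.
Variable h : 'I_n -> T.

Lemma PE_xpow b : PE (fun q : pt R T => xpow (fun i => q (h i)) b).
Proof. by apply: PE_prod => i; apply: PE_exp; apply: PE_coord. Qed.

Lemma PE_wt k : PE (fun q : pt R T => wt (fun i => q (h i)) k).
Proof. rewrite /wt; case: (mon_of k) => [b|]; [exact: PE_xpow | exact: PE_const]. Qed.

Lemma PE_Q : PE (fun q : pt R T => Q (fun i => q (h i))).
Proof. by apply: PE_sum => k; apply: PE_wt. Qed.

Variable A : pt R T -> Prop.

Lemma ctn_xpow b : ctn A (fun q : pt R T => xpow (fun i => q (h i)) b).
Proof. by apply: ctn_prod => i; apply: ctn_exp; apply: ctn_coord. Qed.

Lemma ctn_wt k : ctn A (fun q : pt R T => wt (fun i => q (h i)) k).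
Proof. rewrite /wt; case: (mon_of k) => [b|]; [exact: ctn_xpow | exact: ctn_const]. Qed.

Lemma ctn_Q : ctn A (fun q : pt R T => Q (fun i => q (h i))).
Proof. by apply: ctn_sum => k; apply: ctn_wt. Qed.

Lemma sa_zero_set : semialgebraic (fun q : pt R T => zero_set F (fun i => q (h i))).
Proof.
apply: sa_all => j; apply: sa_eq0.
exact: (@PE_meval R T n (F j) (fun i q => q (h i)) (fun i => PE_coord R (h i))).
Qed.

Variable hz : 'I_Dn -> T.

Lemma sa_Wset : semialgebraic (fun q : pt R T => Wset (fun i => q (h i)) (fun k => q (hz k))).
Proof.
apply: (sa_ext (A := fun q => zero_set F (fun i => q (h i)) /\
   ((forall k, 0 < q (hz k)) /\ 0 < 1 - \sum_k q (hz k)))).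
  by move=> q; rewrite subr_gt0; split => [[? [? ?]]|[? ? ?]].
apply: sa_and; first exact: sa_zero_set.
apply: sa_and; first by apply: sa_all => k; apply: sa_gt0; apply: PE_coord.
apply: sa_gt0; apply: PE_sub; first exact: PE_const.
by apply: PE_sum => k; apply: PE_coord.
Qed.
End Gen.

Lemma eq_div_iff (a b c : R) : c != 0 -> (a = b / c) <-> (a * c - b = 0).
Proof.
move=> c0; split => [->|]; first by rewrite mulfVK // subrr.
by move/eqP; rewrite subr_eq0 => /eqP <-; rewrite mulfK.
Qed.

Lemma Wset_Q x z : Wset x z -> 0 < Q x.
Proof. by move=> [HF _ _]; apply: Q_gt0; have [] := HS HF. Qed.

Lemma iso2 : sa_isomorphic Wp (TMNE u).
Proof.
exists f2, g2; split.
- by move=> p Hp; apply/TMNE_char; split.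
- by move=> w /TMNE_char [].
- by move=> p _ [i|k].
- move=> w /TMNE_char [_ Hy]; apply: coord_cases => j //.
  exact: esym (Hy j).
split.
- apply: ctn_vec; apply: coord_cases => j.
  + exact: ctn_coord.
  + apply: ctn_mul; first exact: ctn_wt.
    apply: ctn_inv; last exact: ctn_Q.
    by move=> p Hp; rewrite gt_eqF //; apply: Wset_Q Hp.
  + exact: ctn_coord.
- by apply: ctn_vec => -[i|k]; apply: ctn_coord.
pose xz (z : pt R (TW + TT)%type) := fun i => z (inl (inl i)).
pose N (t : TT) (z : pt R (TW + TT)%type) := @fam (fun i => z (inl (inl i)))
   (fun k => wt (xz z) (lift ord0 k)) (fun k => z (inl (inr k))) (tag t) (tagged t).
pose D (t : TT) (z : pt R (TW + TT)%type) := @fam (fun _ => 1) (fun _ => Q (xz z)) (fun _ => 1)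
   (tag t) (tagged t).
apply: (sa_ext (A := fun z => Wset (xz z) (fun k => z (inl (inr k))) /\
   forall t, z (inr t) * D t z - N t z = 0)).
  move=> z; split => [] [HW Ht]; split => // t;
    (have Qn : Q (xz z) != 0 by rewrite gt_eqF // (Wset_Q HW)).
  - move: t (Ht t); apply: coord_cases => j; rewrite /D /N /f2 /= => H.
    + by apply/eqP; rewrite -subr_eq0 -[X in X - _]mulr1; apply/eqP.
    + exact: (eq_div_iff _ _ Qn).2 H.
    + by apply/eqP; rewrite -subr_eq0 -[X in X - _]mulr1; apply/eqP.
  - move: t (Ht t); apply: coord_cases => j; rewrite /D /N /f2 /= => H.
    + by rewrite H mulr1 subrr.
    + exact: (eq_div_iff _ _ Qn).1 H.
    + by rewrite H mulr1 subrr.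
apply: sa_and; first exact: sa_Wset.
apply: sa_all => t; apply: sa_eq0; apply: PE_sub; first apply: PE_mul.
- exact: PE_coord.
- move: t; apply: coord_cases => j; rewrite /D /=; [exact: PE_const | exact: PE_Q | exact: PE_const].
- move: t; apply: coord_cases => j; rewrite /N /=; [exact: PE_coord | exact: PE_wt | exact: PE_coord].
Qed.


Definition psi (s : R) := (s + Num.sqrt (s ^+ 2 + 4)) / 2.

Lemma sq4_gt0 (s : R) : 0 < s ^+ 2 + 4.
Proof. have := sqr_ge0 s; lra. Qed.

Lemma sqrt4_gt (s : R) : `|s| < Num.sqrt (s ^+ 2 + 4).
Proof.
have H0 : 0 <= Num.sqrt (s ^+ 2 + 4) := sqrtr_ge0 _.
have H1 : Num.sqrt (s ^+ 2 + 4) ^+ 2 = s ^+ 2 + 4 by rewrite sqr_sqrtr // ltW // sq4_gt0.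
have H2 : `|s| ^+ 2 = s ^+ 2 by rewrite real_normK // num_real.
have H3 : 0 <= `|s| by [].
move: H1 H2; rewrite !expr2 => H1 H2; nra.
Qed.

Lemma psi_gt0 s : 0 < psi s.
Proof.
rewrite /psi divr_gt0 //; have := sqrt4_gt s; have := ler_norm s.
have := normrN s; have := ler_norm (- s); lra.
Qed.

Lemma psi_inv (r : R) : 0 < r -> psi (r - r^-1) = r.
Proof.
move=> r0; have rn : r != 0 by rewrite gt_eqF.
have E : (r - r^-1) ^+ 2 + 4 = (r + r^-1) ^+ 2 by field.
have rp : 0 < r + r^-1 by rewrite addr_gt0 // invr_gt0.
by rewrite /psi E sqrtr_sqr gtr0_norm //; field.
Qed.

Lemma inv_psi (s : R) : psi s - (psi s)^-1 = s.
Proof.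
set t := Num.sqrt (s ^+ 2 + 4).
have E : t ^+ 2 = s ^+ 2 + 4 by rewrite sqr_sqrtr // ltW // sq4_gt0.
have st : s + t != 0.
  rewrite gt_eqF //; have := sqrt4_gt s; have := ler_norm (- s); rewrite normrN -/t.
  lra.
rewrite /psi -/t.
have -> : (s + t) / 2 - ((s + t) / 2)^-1 = s + (t ^+ 2 - s ^+ 2 - 4) / (2 * (s + t)).
  by field; rewrite st.
by rewrite E (_ : s ^+ 2 + 4 - s ^+ 2 - 4 = 0) ?mul0r ?addr0 //; ring.
Qed.

Definition cW (p : pt R TW) := 1 - \sum_l p (inr l).

Definition f1 (p : pt R TW) : pt R TW := fun t =>
  match t with inl i => p (inl i) | inr k => p (inr k) / cW p - cW p / p (inr k) end.

Definition g1 (q : pt R TW) : pt R TW := fun t =>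
  match t with
  | inl i => q (inl i)
  | inr k => psi (q (inr k)) / (1 + \sum_l psi (q (inr l)))
  end.

Lemma ctn_psi (T : finType) (A : pt R T -> Prop) (t : T) : ctn A (fun q => psi (q t)).
Proof.
apply: ctn_mul; last exact: ctn_const.
apply: ctn_add; first exact: ctn_coord.
apply: ctn_sqrt; first by move=> *; apply: sq4_gt0.
by apply: ctn_add; [apply: ctn_exp; apply: ctn_coord | apply: ctn_const].
Qed.

Lemma iso1 : sa_isomorphic Wp (@cyl R _ Dn (zero_set F)).
Proof.
exists f1, g1; split.
- by move=> p [].
- move=> q Hq; have Sp : 0 < 1 + \sum_l psi (q (inr l)).
    by apply: ltr_pwDl => //; apply: sumr_ge0 => l _; apply: ltW; apply: psi_gt0.
  split => //.
    by move=> k /=; rewrite divr_gt0 // psi_gt0.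
  rewrite /= -mulr_suml ltr_pdivrMr // mul1r ltrDr ltr01 //.
- move=> p [HF Hz Hs] [i|k] //=.
  have c0 : 0 < cW p by rewrite /cW subr_gt0.
  have E l : p (inr l) / cW p - cW p / p (inr l) = p (inr l) / cW p - (p (inr l) / cW p)^-1.
    by rewrite invf_div.
  rewrite E psi_inv ?divr_gt0 //.
  under eq_bigr => l _ do rewrite E psi_inv ?divr_gt0 //.
  rewrite -mulr_suml.
  have : cW p + \sum_l p (inr l) = 1 by rewrite /cW subrK.
  move: (\sum_l p (inr l)) => S ES.
  have cn : cW p != 0 by rewrite gt_eqF.
  have -> : 1 + S / cW p = (cW p + S) / cW p by field.
  rewrite ES div1r.
  by field.
- move=> q Hq [i|k] //=.
  set P := \sum_l psi (q (inr l)).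
  have Pp : 0 <= P by apply: sumr_ge0 => l _; apply: ltW; apply: psi_gt0.
  have Sn : 1 + P != 0 by rewrite gt_eqF //; lra.
  have -> : cW (g1 q) = (1 + P)^-1.
    rewrite /cW /g1 /= -mulr_suml -/P; field; exact: Sn.
  have pk := psi_gt0 (q (inr k)); have pkn : psi (q (inr k)) != 0 by rewrite gt_eqF.
  have -> : psi (q (inr k)) / (1 + P) / (1 + P)^-1 = psi (q (inr k)) by field.
  have -> : (1 + P)^-1 / (psi (q (inr k)) / (1 + P)) = (psi (q (inr k)))^-1 by field; rewrite ?pkn ?Sn.
  exact: inv_psi.
split.
- apply: ctn_vec => -[i|k]; first exact: ctn_coord.
  have cc : ctn Wp cW by apply: ctn_sub; [apply: ctn_const | apply: ctn_sum => l; apply: ctn_coord].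
  have c0 : forall p, Wp p -> cW p != 0 by move=> p [_ _ Hs]; rewrite gt_eqF // /cW subr_gt0.
  have z0 : forall p, Wp p -> p (inr k) != 0 by move=> p [_ Hz _]; rewrite gt_eqF.
  apply: ctn_sub; apply: ctn_mul.
  + exact: ctn_coord.
  + exact: ctn_inv c0 cc.
  + exact: cc.
  + exact: ctn_inv z0 (@ctn_coord _ _ Wp (inr k)).
- apply: ctn_vec => -[i|k]; first exact: ctn_coord.
  apply: ctn_mul; first exact: ctn_psi.
  apply: ctn_inv.
    move=> q _; rewrite gt_eqF //; apply: ltr_pwDl => //.
    by apply: sumr_ge0 => l _; apply: ltW; apply: psi_gt0.
  apply: ctn_add; first exact: ctn_const.
  by apply: ctn_sum => l; apply: ctn_psi.
pose zk (z : pt R (TW + TW)%type) k := z (inl (inr k)).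
pose c (z : pt R (TW + TW)%type) := 1 - \sum_l zk z l.
pose G (t : TW) (z : pt R (TW + TW)%type) := match t with
  | inl i => z (inr (inl i)) - z (inl (inl i))
  | inr k => z (inr (inr k)) * (zk z k * c z) - (zk z k ^+ 2 - c z ^+ 2) end.
apply: (sa_ext (A := fun z => Wset (fun i => z (inl (inl i))) (zk z) /\ forall t, G t z = 0)).
  move=> z; split => -[HW Ht]; split => // -[i|k].
  - by have := Ht (inl i); rewrite /G /f1 /= => /eqP; rewrite subr_eq0 => /eqP.
  - have := Ht (inr k); rewrite /G /f1 /=.
    move: HW => [_ Hz Hs]; have zk0 : zk z k != 0 by rewrite gt_eqF //; exact: Hz.
    have c0 : c z != 0 by rewrite gt_eqF // /c subr_gt0; exact: Hs.
    move/(eq_div_iff _ _ (mulf_neq0 zk0 c0)) => ->; rewrite /cW -/(c z) -/(zk z k).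
    by field; apply/andP.
  - by have := Ht (inl i); rewrite /G /f1 /= => ->; rewrite subrr.
  - have := Ht (inr k); rewrite /G /f1 /=.
    move: HW => [_ Hz Hs]; have zk0 : zk z k != 0 by rewrite gt_eqF //; exact: Hz.
    have c0 : c z != 0 by rewrite gt_eqF // /c subr_gt0; exact: Hs.
    move=> ->; apply/(eq_div_iff _ _ (mulf_neq0 zk0 c0)); rewrite /cW -/(c z) -/(zk z k).
    by field; apply/andP.
apply: sa_and; first exact: sa_Wset.
apply: sa_all => -[i|k]; apply: sa_eq0; rewrite /G.
  by apply: PE_sub; apply: PE_coord.
have Pc : PE (c : pt R (TW + TW)%type -> R).
  by apply: PE_sub; [apply: PE_const | apply: PE_sum => l; apply: PE_coord].
apply: PE_sub; first apply: PE_mul; first exact: PE_coord.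
  by apply: PE_mul => //; apply: PE_coord.
by apply: PE_sub; apply: PE_exp => //; apply: PE_coord.
Qed.

Lemma caseB : exists u : payoffs R (game3_dims n m (Dnum F)),
    stably_isomorphic (zero_set F) (TMNE u).
Proof.
exists u.
have sa : semialgebraic (zero_set F) := sa_zero_set id.
apply: st_trans (st_sym (st_proj Dn sa)) _.
exact: st_trans (st_sym (st_iso iso1)) (st_iso iso2).
Qed.

End Mono.

Section CaseA.
Variable R : realType.
Variables n m : nat.
Variable F : 'I_m -> {mpoly R[n]}.
Hypothesis n0 : (0 < n)%N.
Hypothesis HS : forall x : 'I_n -> R, zero_set F x ->
  (forall i, 0 < x i) /\ \sum_(i < n) x i < 1.
Hypothesis Hc : forall i j, deg_in i (F j) = 0%N.

Lemma constF (x : 'I_n -> R) j : (F j).@[x] = (F j).@[fun _ => 0].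
Proof.
rewrite !mevalE; apply: eq_big_seq => a Ha; congr (_ * _).
apply: eq_bigr => i _.
have : (a i <= deg_in i (F j))%N.
  by rewrite /deg_in (leq_bigmax_seq (F := fun mo : 'X_{1..n} => mo i) a).
by rewrite Hc leqn0 => /eqP ->; rewrite !expr0.
Qed.

Lemma emptyS x : ~ zero_set F x.
Proof.
move=> Hx; have H0 : zero_set F (fun _ => 0) by move=> j; rewrite -(constF x); apply: Hx.
by have [Hp _] := HS H0; have := Hp (Ordinal n0); rewrite ltxx.
Qed.

Definition dA := game3_dims n m (Dnum F).

Definition u0 : payoffs R dA :=
  fun i s => if i == p0 then ((s p0 : nat) == 0%N)%:R else 0.

Lemma noTMNE w : ~ TMNE u0 w.
Proof.
move=> [_ Hpos _ Heq].
pose j1 : 'I_(dA p0).+1 := lift ord0 (Ordinal n0).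
have := Heq p0 j1; rewrite /exp_payoff_pure.
rewrite big1; last first.
  by move=> s /eqP Hs; rewrite /u0 eqxx Hs /= mul0r.
pose s0 : profile dA := [ffun t => ord0].
rewrite (bigD1 s0) /=; last by rewrite /s0 ffunE.
move/eqP; rewrite eq_sym paddr_eq0.
- rewrite /u0 eqxx /s0 ffunE /= mul1r => /andP [+ _].
  by rewrite gt_eqF // prodr_gt0 // => k _; apply: Hpos.
- by rewrite /u0 eqxx /s0 ffunE /= mul1r prodr_ge0 // => k _; apply: ltW; apply: Hpos.
- apply: sumr_ge0 => s _; rewrite /u0 eqxx; apply: mulr_ge0; first by case: eqP.
  by rewrite prodr_ge0 // => k _; apply: ltW; apply: Hpos.
Qed.

Lemma caseA : exists u : payoffs R (game3_dims n m (Dnum F)),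
    stably_isomorphic (zero_set F) (TMNE u).
Proof.
exists u0; apply: st_iso.
exists (fun _ _ => 0), (fun _ _ => 0); split.
- by move=> x /emptyS.
- by move=> y /noTMNE.
- by move=> x /emptyS.
- by move=> y /noTMNE.
split.
- by move=> x /emptyS.
- by move=> y /noTMNE.
by apply: (sa_ext (A := fun _ => False)) (sa_False _ _) => z; split => // -[/emptyS].
Qed.
End CaseA.

Unset Implicit Arguments.
Set Strict Implicit.

Theorem theorem5 (R : realType) (n m : nat) (F : 'I_m -> {mpoly R[n]}) :
  (0 < n)%N ->
  (forall x : 'I_n -> R, zero_set F x ->
     (forall i, 0 < x i) /\ \sum_(i < n) x i < 1) ->
  exists u : payoffs R (game3_dims n m (Dnum F)),
    stably_isomorphic (zero_set F) (TMNE u).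
Proof.
move=> n0 HS.
case: (boolP [exists i, exists j, (0 < deg_in i (F j))%N]) => [/existsP [i /existsP [j Hij]]|H].
  exact: (caseB Hij HS).
apply: caseA => // i j; apply/eqP; rewrite -leqn0 leqNgt; apply/negP => Hij.
by move/negP: H; apply; apply/existsP; exists i; apply/existsP; exists j.
Qed.
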